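(* For every nonnegative integer $r$, $$\int_0^{\frac{\pi}{2}}\sin^{2r}x\,\sin\frac{x}{2}\,\mathrm{d}x=\frac{16^r}{(4r+1)\binom{4r}{2r}}\left(2+\sqrt{2}\sum_{k=0}^r \frac{\binom{4k}{2k}}{(4k-1)16^k}\right).$$ *)

(* Defs.v *)
From Stdlib Require Import Reals.
From Coquelicot Require Import Coquelicot.

(* Main.v *)
Require Import Defs.
From Stdlib Require Import Reals.
From Coquelicot Require Import Coquelicot.
From Stdlib Require Import Lra Lia Factorial.
Open Scope R_scope.

Definition ff (r : nat) (x : R) := sin x ^ (2 * r) * sin (x / 2).

Lemma ff_cont r x : continuous (ff r) x.
Proof. apply (ex_derive_continuous (V:=R_NormedModule) (ff r)). unfold ff. auto_derive. auto. Qed.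

Lemma ff_ex r : ex_RInt (ff r) 0 (PI/2).
Proof. apply (ex_RInt_continuous (V:=R_CompleteNormedModule)). intros; apply ff_cont. Qed.

Lemma cos_PI4' : cos (PI/2/2) = sqrt 2 / 2.
Proof.
  replace (PI/2/2) with (PI/4) by field. rewrite cos_PI4.
  assert (H := sqrt_sqrt 2). assert (H2 : 0 < sqrt 2) by (apply sqrt_lt_R0; lra).
  assert (E : 1 / sqrt 2 = sqrt 2 / (sqrt 2 * sqrt 2)) by (field; lra).
  rewrite H in E by lra. exact E.
Qed.

Lemma I0 : RInt (ff 0) 0 (PI/2) = 2 - sqrt 2.
Proof.
  apply is_RInt_unique.
  replace (2 - sqrt 2) with ((fun x => -2 * cos (x/2)) (PI/2) - (fun x => -2 * cos (x/2)) 0).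
  - apply (is_RInt_derive (V:=R_CompleteNormedModule) (fun x => -2 * cos (x/2)) (ff 0)).
    + intros x _. unfold ff. auto_derive; auto. simpl. unfold Rdiv. field.
    + intros x _. apply ff_cont.
  - simpl. rewrite cos_PI4'. replace (0/2) with 0 by field. rewrite cos_0. field.
Qed.

Lemma deriv_step (m:nat) x : is_derive (fun x => sin x ^ (2*m+1) * (-8*(INR m+1) * cos x * sin (x/2) + 2 * sin x * cos (x/2))) x
  ((16*(INR m+1)^2-1) * (sin x ^ (2*(m+1)) * sin (x/2)) - (16*(INR m+1)^2 - 8*(INR m+1)) * (sin x ^ (2*m) * sin (x/2))).
Proof.
auto_derive; auto.
replace (m+(m+0)+1)%nat with (2*m+1)%nat by lia.
replace (Init.Nat.pred (2*m+1)) with (2*m)%nat by lia.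
replace (2*(m+1))%nat with (2*m+1+1)%nat by lia.
rewrite !pow_add, plus_INR, mult_INR. simpl INR.
set (p := sin x ^ (2*m)).
assert (H := sin2_cos2 x). unfold Rsqr in H.
replace (x/2) with (x*/2) by reflexivity.
apply Rminus_diag_uniq.
transitivity (((1+1)*INR m+1)*(-8*(INR m+1))*p*sin (x*/2)*(sin x * sin x + cos x * cos x - 1)); [field | rewrite H; ring].
Qed.

Lemma Irec m : (16*(INR m+1)^2-1) * RInt (ff (m+1)) 0 (PI/2)
   = (16*(INR m+1)^2 - 8*(INR m+1)) * RInt (ff m) 0 (PI/2) + sqrt 2.
Proof.
  set (F := fun x => sin x ^ (2*m+1) * (-8*(INR m+1) * cos x * sin (x/2) + 2 * sin x * cos (x/2))).
  assert (H1 : is_RInt (fun x => (16*(INR m+1)^2-1) * ff (m+1) x - (16*(INR m+1)^2 - 8*(INR m+1)) * ff m x) 0 (PI/2) (F (PI/2) - F 0)).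
  { apply (is_RInt_derive (V:=R_CompleteNormedModule) F).
    - intros x _. apply deriv_step.
    - intros x _. apply (continuous_minus (V := R_NormedModule)); apply (continuous_scal_r (K := R_AbsRing) (V := R_NormedModule)); apply ff_cont. }
  assert (H2 : is_RInt (fun x => (16*(INR m+1)^2-1) * ff (m+1) x - (16*(INR m+1)^2 - 8*(INR m+1)) * ff m x) 0 (PI/2)
     ((16*(INR m+1)^2-1) * RInt (ff (m+1)) 0 (PI/2) - (16*(INR m+1)^2 - 8*(INR m+1)) * RInt (ff m) 0 (PI/2))).
  { apply (is_RInt_minus (V := R_NormedModule)); apply (is_RInt_scal (V := R_NormedModule)); apply (RInt_correct (V:=R_CompleteNormedModule)); apply ff_ex. }
  assert (E := is_RInt_unique _ _ _ _ H1). rewrite (is_RInt_unique _ _ _ _ H2) in E.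
  assert (FP : F (PI/2) = sqrt 2).
  { unfold F. rewrite sin_PI2, cos_PI2, pow1, cos_PI4'. field. }
  assert (F0 : F 0 = 0).
  { unfold F. rewrite sin_0. rewrite pow_i by lia. ring. }
  rewrite FP, F0 in E. lra.
Qed.

Lemma fact_pos' n : 0 < INR (fact n).
Proof. apply lt_0_INR. apply lt_O_fact. Qed.

Lemma Cd n : Binomial.C (2*n) n = INR (fact (2*n)) / (INR (fact n) * INR (fact n)).
Proof. unfold Binomial.C. replace (2*n-n)%nat with n by lia. reflexivity. Qed.

Lemma Cstep m : Binomial.C (4 * S m) (2 * S m) =
  Binomial.C (4*m) (2*m) * ((4*INR m+4)*(4*INR m+3)*(4*INR m+2)*(4*INR m+1))
     / ((2*INR m+2)*(2*INR m+2)*(2*INR m+1)*(2*INR m+1)).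
Proof.
  replace (4 * S m)%nat with (2 * (S (S (2*m))))%nat by lia.
  replace (2 * S m)%nat with (S (S (2*m)))%nat by lia.
  replace (4 * m)%nat with (2 * (2*m))%nat by lia.
  rewrite !Cd.
  replace (2 * S (S (2*m)))%nat with (S (S (S (S (2*(2*m))))))%nat by lia.
  rewrite !fact_simpl, !mult_INR, !S_INR, !mult_INR. simpl INR.
  assert (A := fact_pos' (2*m)). assert (B := fact_pos' (2*(2*m))).
  assert (0 <= INR m) by apply pos_INR.
  assert (A2 := fact_pos' (m+(m+0))).
  field. repeat split; lra.
Qed.

Lemma C_pos n k : 0 < Binomial.C n k.
Proof.
  unfold Binomial.C. apply Rdiv_lt_0_compat. apply fact_pos'.
  apply Rmult_lt_0_compat; apply fact_pos'.
Qed.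

Theorem proposition4p0p1 (r : nat) :
  RInt (fun x => (sin x) ^ (2 * r) * sin (x / 2)) 0 (PI / 2) =
  16 ^ r / ((4 * INR r + 1) * Binomial.C (4 * r) (2 * r)) *
  (2 + sqrt 2 * sum_f_R0 (fun k => Binomial.C (4 * k) (2 * k) / ((4 * INR k - 1) * 16 ^ k)) r).
Proof.
  change (fun x => (sin x) ^ (2 * r) * sin (x / 2)) with (ff r).
  induction r as [|m IH].
  - rewrite I0. simpl. unfold Binomial.C. simpl. field.
  - assert (HR := Irec m). replace (m+1)%nat with (S m) in HR by lia.
    rewrite tech5. rewrite !Cstep. rewrite !S_INR.
    assert (Ap := C_pos (4*m) (2*m)).
    set (A := Binomial.C (4*m) (2*m)) in *.
    set (Sm := sum_f_R0 (fun k => Binomial.C (4 * k) (2 * k) / ((4 * INR k - 1) * 16 ^ k)) m) in *.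
    assert (0 <= INR m) by apply pos_INR.
    assert (Ha : 16*(INR m+1)^2-1 <> 0) by nra.
    assert (E : RInt (ff (S m)) 0 (PI/2) = ((16*(INR m+1)^2 - 8*(INR m+1)) * RInt (ff m) 0 (PI/2) + sqrt 2) / (16*(INR m+1)^2-1)).
    { assert (G : forall a b c : R, a * c = b -> a <> 0 -> c = b / a) by (intros a b c H0 H1; subst; field; auto).
      apply G; [exact HR | exact Ha]. }
    rewrite E, IH. simpl pow. match goal with |- ?a = ?b => change (@eq R a b) end.
    assert (0 < 16^m) by (apply pow_lt; lra).
    field. repeat split; nra.
Qed.
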